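(* Let $\psi$ and $\phi$ be Borel probability measures on $\mathbb R_+=[0,\infty)$, each with full support on $\mathbb R_+$. For every Borel measurable $\sigma:\mathbb R_+\to\mathbb R_+$ with $\sigma(w)\le w$ for all $w$, the transition kernel on $\mathbb R_+$ defined by $$P_\sigma(w,B)=\int\!\!\int \mathbb 1_B\big(\eta'(w-\sigma(w))+y'\big)\,\psi(\mathrm d\eta')\,\phi(\mathrm dy')\qquad(w\in\mathbb R_+,\ B\subset\mathbb R_+\text{ Borel})$$ is open set irreducible.
   Context: $\mathbb R_+$ carries its usual metric (open sets are relatively open subsets of $[0,\infty)$). A measure has full support on $\mathbb R_+$ if it assigns positive mass to every nonempty open subset of $\mathbb R_+$. For a transition kernel $Q$ on a metric space $\mathsf X$, $Q^n$ denotes the $n$-step kernel; a point $y$ is $Q$-reachable from $x$ if for every open neighborhood $G$ of $y$ there is $n\in\mathbb N=\{1,2,\dots\}$ with $Q^n(x,G)>0$; $Q$ is open set irreducible if every $y\in\mathsf X$ is $Q$-reachable from every $x\in\mathsf X$. *)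

(* Defs.v *)
From HB Require Import structures.
From mathcomp Require Import all_boot all_order all_algebra.
From mathcomp Require Import all_classical all_reals all_analysis.
Set Implicit Arguments. Unset Strict Implicit. Unset Printing Implicit Defensive.
Import Order.TTheory GRing.Theory Num.Theory.
Import numFieldNormedType.Exports.
Local Open Scope classical_set_scope.
Local Open Scope ring_scope.

Definition Rplus (R : realType) : set R := [set x : R | 0 <= x].
Arguments Rplus R : clear implicits.

(* A (Borel) probability measure on R is "a probability measure on R_+"
   when it is concentrated on R_+. *)
Definition concentrated_on_Rplus (R : realType) (mu : probability R R) : Prop :=
  mu (~` Rplus R) = 0%E.

Definition full_support_Rplus (R : realType) (mu : set R -> \bar R) : Prop :=
  forall U : set R, open U -> U `&` Rplus R !=set0 -> (0 < mu (U `&` Rplus R))%E.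

(* n-step kernels: kpow Q n = Q^(n+1), with Q^(n+2)(x,B) = \int Q(x,dz) Q^(n+1)(z,B). *)
Fixpoint kpow (R : realType) (Q : R -> {measure set R -> \bar R}) (n : nat)
  : R -> set R -> \bar R :=
  match n with
  | O => fun x B => Q x B
  | S m => fun x B => (\int[Q x]_z kpow Q m z B)%E
  end.

(* Open set irreducibility of a kernel on the state space R_+:
   every y in R_+ is reachable from every x in R_+, i.e. every open
   neighbourhood G = U `&` R_+ of y in R_+ gets positive Q^n(x, G) mass
   for some n >= 1 (here n = m+1). *)
Definition open_set_irreducible (R : realType) (Q : R -> {measure set R -> \bar R})
  : Prop :=
  forall x y : R, Rplus R x -> Rplus R y ->
  forall U : set R, open U -> U y ->
  exists m : nat, (0 < kpow Q m x (U `&` Rplus R))%E.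

Definition P_formula (R : realType) (psi phi : probability R R) (sigma : R -> R)
  (w : R) (B : set R) : \bar R :=
  (\int[phi]_y' \int[psi]_eta' (\1_B (eta' * (w - sigma w) + y') : R)%:E)%E.

(* Main.v *)
Require Import Defs.
From HB Require Import structures.
From mathcomp Require Import all_boot all_order all_algebra.
From mathcomp Require Import all_classical all_reals all_analysis.
From mathcomp Require Import measurable_realfun.
From mathcomp Require Import ring lra.
Import Order.TTheory GRing.Theory Num.Theory.
Import numFieldNormedType.Exports.
Local Open Scope classical_set_scope.
Local Open Scope ring_scope.

Lemma le_integral_any d (T : measurableType d) (R : realType)
  (mu : {measure set T -> \bar R}) (f g : T -> \bar R) :
  (forall x, (0 <= g x)%E) -> (forall x, (g x <= f x)%E) ->
  (\int[mu]_x g x <= \int[mu]_x f x)%E.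
Proof.
move=> g0 gf.
rewrite !ge0_integralTE //; last by move=> x; exact: le_trans (g0 x) (gf x).
apply: ge_ereal_sup => _ [h hg <-]; apply: ereal_sup_ubound; exists h => //.
by move=> x; exact: le_trans (hg x) (gf x).
Qed.

Lemma lb_integral d (T : measurableType d) (R : realType)
  (mu : {measure set T -> \bar R}) (f : T -> \bar R) (A : set T) (c : \bar R) :
  measurable A -> (0 <= c)%E -> (forall x, (0 <= f x)%E) ->
  (forall x, A x -> (c <= f x)%E) ->
  (c * mu A <= \int[mu]_x f x)%E.
Proof.
move=> mA c0 f0 cf.
rewrite -integral_cst // integral_mkcond.
apply: le_integral_any.
  by move=> x; rewrite /patch; case: ifP.
move=> x; rewrite /patch; case: ifP => //; rewrite inE => Ax.
exact: cf.
Qed.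

Lemma Rplus_meas (R : realType) : measurable (Rplus R).
Proof. by apply: measurable_realfun.closed_measurable; exact: closed_ge. Qed.

Theorem lemma5p1 (R : realType) (psi phi : probability R R)
  (psi_Rplus : concentrated_on_Rplus psi) (phi_Rplus : concentrated_on_Rplus phi)
  (psi_supp : full_support_Rplus psi) (phi_supp : full_support_Rplus phi)
  (sigma : R -> R)
  (sigma_meas : measurable_fun (Rplus R) sigma)
  (sigma_ge0 : forall w, 0 <= w -> 0 <= sigma w)
  (sigma_le : forall w, 0 <= w -> sigma w <= w)
  (P : R -> {measure set R -> \bar R})
  (P_def : forall w, 0 <= w -> forall B, measurable B ->
     P w B = P_formula psi phi sigma w B) :
  open_set_irreducible P.
Proof.
move=> x y x0 y0 U oU Uy; exists 0%N => /=.
have mG : measurable (U `&` Rplus R).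
  by apply: measurableI; [exact: open_measurable|exact: Rplus_meas].
rewrite P_def //.
have : nbhs y U by apply: open_nbhs_nbhs; split.
move=> /nbhs_ballP [e /= e0 he].
set a := x - sigma x.
have a0 : 0 <= a by rewrite /a subr_ge0; apply: sigma_le.
set dl := e / (2 * (a + 1)).
have dl0 : 0 < dl by rewrite /dl divr_gt0 // mulr_gt0 // ltr_wpDl.
set A := ball y (e / 2) `&` Rplus R.
set Bd := ball (0:R) dl `&` Rplus R.
have mA : measurable A by apply: measurableI; [apply: open_measurable; exact: ball_open|exact: Rplus_meas].
have mB : measurable Bd by apply: measurableI; [apply: open_measurable; exact: ball_open|exact: Rplus_meas].
have pB : (0 < psi Bd)%E.
  apply: psi_supp; first exact: ball_open.
  exists 0; split; [exact: ballxx|by rewrite /Rplus /=].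
have pA : (0 < phi A)%E.
  apply: phi_supp; first exact: ball_open.
  exists y; split; [apply: ballxx; by rewrite divr_gt0|by []].
apply: (lt_le_trans (mule_gt0 pB pA)).
rewrite /P_formula.
apply: lb_integral => //.
- move=> z; apply: integral_ge0 => t _.
  by rewrite lee_fin indicE ler0n.
move=> z Az.
rewrite -[X in (X <= _)%E]mul1e.
apply: lb_integral => //.
move=> t Bt; rewrite lee_fin indicE.
suff -> : (t * (x - sigma x) + z) \in U `&` Rplus R by [].
rewrite inE.
move: Az Bt; rewrite /A /Bd /Rplus /ball /= => -[yz z0] [tl t0].
rewrite sub0r normrN in tl.
split; last by rewrite addr_ge0 // mulr_ge0.
apply: he; rewrite /ball /= -/a.
have tdl : t <= dl by rewrite -(ger0_norm t0) ltW.
have a1 : a + 1 != 0 by rewrite gt_eqF // ltr_wpDl.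
have dla : dl * (a + 1) = e / 2 by rewrite /dl; field; rewrite a1.
have ta : t * a <= e / 2.
  rewrite -dla; apply: (le_trans (ler_wpM2r a0 tdl)).
  by rewrite ler_wpM2l ?(ltW dl0) // lerDl.
have ta0 : 0 <= t * a by rewrite mulr_ge0.
have -> : y - (t * a + z) = (y - z) - t * a by ring.
apply: (le_lt_trans (ler_normB _ _)).
rewrite (ger0_norm ta0).
have -> : e = e / 2 + e / 2 by rewrite -splitr.
by apply: ltr_leD.
Qed.
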